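(* There is a constant $C$ such that for every sufficiently large $n$ there exists a $2$-planar graph of girth $5$ on $n$ vertices with at least $\left(2+\frac{2}{7}\right)n-C$ edges.
   Context: All graphs are finite and simple. A graph is $k$-planar if it admits a drawing in the plane in which every edge is crossed at most $k$ times. The girth of a graph is the length of its shortest cycle. (The paper states the edge count as $(2+\frac27)n-O(1)$.) *)

(* Defs.v *)
From Stdlib Require Import Reals.
From mathcomp Require Import all_boot.

Set Implicit Arguments.
Unset Strict Implicit.
Unset Printing Implicit Defensive.

Definition plane := (R * R)%type.

Definition simple_graph n (e : rel 'I_n) : Prop := symmetric e /\ irreflexive e.

Definition edges n (e : rel 'I_n) : {set 'I_n * 'I_n} :=
  [set p : 'I_n * 'I_n | (p.1 < p.2)%N && e p.1 p.2].

Definition has_cycle_of_length n (e : rel 'I_n) (k : nat) : Prop :=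
  (3 <= k)%N /\
  exists f : nat -> 'I_n,
    (forall i j, (i < k)%N -> (j < k)%N -> f i = f j -> i = j) /\
    (forall i, (i < k)%N -> e (f i) (f ((i.+1) %% k))).

Definition girth_is n (e : rel 'I_n) (g : nat) : Prop :=
  has_cycle_of_length e g /\ forall l, (l < g)%N -> ~ has_cycle_of_length e l.

(* A Jordan arc from a to b: a continuous map R -> plane, injective on [0,1],
   with g 0 = a and g 1 = b (only its restriction to [0,1] matters). *)
Definition is_arc (g : R -> plane) (a b : plane) : Prop :=
  continuity (fun t => fst (g t)) /\ continuity (fun t => snd (g t)) /\
  (forall s t : R, Rle 0 s /\ Rle s 1 -> Rle 0 t /\ Rle t 1 -> g s = g t -> s = t) /\
  g R0 = a /\ g R1 = b.

Definition crossing n (e : rel 'I_n) (gam : 'I_n * 'I_n -> R -> plane)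
    (p q : 'I_n * 'I_n) (z : plane) : Prop :=
  q \in edges e /\ q <> p /\
  exists s t : R, Rlt 0 s /\ Rlt s 1 /\ Rlt 0 t /\ Rlt t 1 /\ gam p s = z /\ gam q t = z.

Definition k_planar (k : nat) n (e : rel 'I_n) : Prop :=
  exists (pos : 'I_n -> plane) (gam : 'I_n * 'I_n -> R -> plane),
    injective pos /\
    (forall p, p \in edges e ->
       is_arc (gam p) (pos p.1) (pos p.2) /\
       (forall (t : R) w, Rlt 0 t /\ Rlt t 1 -> gam p t <> pos w)) /\
    (forall p, p \in edges e ->
       exists L : seq (('I_n * 'I_n) * plane),
         (size L <= k)%N /\
         (forall q z, crossing e gam p q z -> List.In (q, z) L)).

(* Main.v *)
Require Import Defs.
From Stdlib Require Import Reals.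
From mathcomp Require Import all_boot.
From Stdlib Require Import ZArith Lia Lra List.
From mathcomp Require Import all_boot zify.
Set Implicit Arguments. Unset Strict Implicit.

Section ZPart.

Local Open Scope Z_scope.
Definition pat : list (Z * (Z*Z)) :=
 (0, (1, 1)) :: (0, (2, -1)) :: (0, (2, 1)) :: (1, (1, 1)) :: (1, (2, -1)) :: (2, (1, 0)) :: (2, (1, 1)) :: (2, (2, -1)) :: (2, (2, 1)) :: (3, (1, 0)) :: (3, (2, -1)) :: (4, (1, 0)) :: (4, (1, 1)) :: (5, (1, -1)) :: (5, (1, 0)) :: (5, (2, 1)) :: (6, (1, -1)) :: nil.
Definition posvec : list (Z*Z) := (0,1)::(1,-2)::(1,-1)::(1,0)::(1,1)::(1,2)::(2,-1)::(2,1)::nil.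
Definition vec16 : list (Z*Z) := posvec ++ List.map (fun d => (- fst d, - snd d)) posvec.
Definition inrow (y:Z) := (0 <=? y) && (y <? 13).
Definition orb7 (c:Z*Z) := (fst c - 2 * snd c) mod 7.
Definition eqZ2 (c d : Z*Z) := (fst c =? fst d) && (snd c =? snd d).
Definition addZ2 (c d : Z*Z) := (fst c + fst d, snd c + snd d).
Definition subZ2 (c d : Z*Z) := (fst c - fst d, snd c - snd d).
Definition pos_edge c d := List.existsb (fun od => (fst od =? orb7 c) && eqZ2 (snd od) d) pat.
Definition adjZ c c' := inrow (snd c) && inrow (snd c') && (pos_edge c (subZ2 c' c) || pos_edge c' (subZ2 c c')).
Definition zrange (a:Z) (k:nat) : list Z := List.map (fun i => a + Z.of_nat i) (List.seq 0 k).
Definition winA := List.list_prod (zrange 0 7) (zrange 0 13).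
Definition nbrs c := List.filter (fun d => adjZ c (addZ2 c d)) vec16.
Definition girth_ok := List.forallb (fun c0 => List.forallb (fun d1 => let c1 := addZ2 c0 d1 in
  List.forallb (fun d2 => let c2 := addZ2 c1 d2 in negb (adjZ c2 c0) &&
    List.forallb (fun d3 => let c3 := addZ2 c2 d3 in
       negb (adjZ c3 c0 && negb (eqZ2 c0 c2) && negb (eqZ2 c1 c3))) (nbrs c2)) (nbrs c1)) (nbrs c0)) winA.
Definition crossZ (a b : Z*Z) := fst a * snd b - snd a * fst b.
Definition dotZ (a b : Z*Z) := fst a * fst b + snd a * snd b.
Definition meetZ (W U V : Z*Z) : bool :=
  let D := crossZ U V in let X := crossZ W V in let Y := crossZ W U in
  if D =? 0 then
    let a := dotZ W U in let b := a + dotZ V U in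
    (X =? 0) && (Y =? 0) && (0 <? Z.max a b) && (Z.min a b <? dotZ U U)
  else (0 <? X*D) && (X*D <? D*D) && (0 <? Y*D) && (Y*D <? D*D).
Definition winQ (A : Z*Z) := List.list_prod (zrange (fst A - 4) 9) (zrange 0 13).
Definition cands (A U : Z*Z) := List.filter (fun CV => meetZ (subZ2 (fst CV) A) U (snd CV) && 
   negb (eqZ2 (fst CV) A && eqZ2 (snd CV) U) && adjZ (fst CV) (addZ2 (fst CV) (snd CV))) (List.list_prod (winQ A) posvec).
Definition cross_ok := List.forallb (fun A => List.forallb (fun U => negb (adjZ A (addZ2 A U)) ||
   (let cs := cands A U in (Nat.leb (List.length cs) 2) && List.forallb (fun CV => negb (crossZ U (snd CV) =? 0)) cs)) posvec) winA.
Lemma girth_okT : girth_ok = true. Proof. vm_compute. reflexivity. Qed.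
Lemma cross_okT : cross_ok = true. Proof. vm_compute. reflexivity. Qed.

Local Open Scope Z_scope.

Lemma adjZ_shift k x1 y1 x2 y2 :
  adjZ (x1 + 7*k, y1) (x2 + 7*k, y2) = adjZ (x1, y1) (x2, y2).
Proof.
rewrite /adjZ /subZ2 /=.
have -> : x2 + 7 * k - (x1 + 7 * k) = x2 - x1 by ring.
have -> : x1 + 7 * k - (x2 + 7 * k) = x1 - x2 by ring.
have H : forall x y, orb7 (x + 7*k, y) = orb7 (x, y).
  move=> x y; rewrite /orb7 /=.
  have -> : x + 7 * k - 2 * y = (x - 2*y) + k * 7 by ring.
  by rewrite Z_mod_plus_full.
by rewrite /pos_edge H H.
Qed.

Lemma adjZ_sym c c' : adjZ c c' = adjZ c' c.
Proof. rewrite /adjZ; do 2 case: inrow => //=; by rewrite orbC. Qed.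

Lemma eqZ2P c d : eqZ2 c d = true -> c = d.
Proof. case: c d => [a b] [c d]; rewrite /eqZ2 /= => /andP [/Z.eqb_spec -> /Z.eqb_spec ->]. done. Qed.

Lemma pat_posvec od : List.In od pat -> List.In (snd od) posvec.
Proof. simpl. intros H; repeat (destruct H as [H|H]; [subst; simpl; tauto|]); destruct H. Qed.

Lemma pos_edge_posvec c d : pos_edge c d = true -> List.In d posvec.
Proof.
rewrite /pos_edge => /List.existsb_exists [od [Hin /andP [_ He]]].
rewrite -(eqZ2P He). exact: pat_posvec.
Qed.

Lemma adjZ_irr c : adjZ c c = false.
Proof.
rewrite /adjZ /subZ2 !Z.sub_diag.
case H: (pos_edge c (0,0)); last by rewrite andbF.
by move: (pos_edge_posvec H) => /=; intuition discriminate.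
Qed.

Lemma posvec_neg d : List.In d posvec -> List.In (- fst d, - snd d) vec16.
Proof. move=> H; apply List.in_or_app; right; exact: (List.in_map (fun d => (- fst d, - snd d))). Qed.

Lemma adj_vec c c' : adjZ c c' = true -> List.In (subZ2 c' c) vec16.
Proof.
rewrite /adjZ => /andP [_ /orP [H|H]].
  apply List.in_or_app; left; exact: pos_edge_posvec H.
move: (posvec_neg (pos_edge_posvec H)).
by case: c c' {H} => [a b] [a' b'] /=; rewrite !Z.opp_sub_distr !(Z.add_comm (- _)).
Qed.

Lemma adj_inrow c c' : adjZ c c' = true -> (0 <= snd c < 13) /\ (0 <= snd c' < 13).
Proof.
rewrite /adjZ /inrow => /andP [/andP [/andP [/Z.leb_le ? /Z.ltb_lt ?] /andP [/Z.leb_le ? /Z.ltb_lt ?]] _].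
lia.
Qed.

Lemma vec16_orient d : List.In d vec16 -> 0 < 13 * fst d + snd d -> List.In d posvec.
Proof.
simpl. intros H; repeat (destruct H as [H|H]; [subst; simpl; (tauto || lia)|]); destruct H.
Qed.

Lemma posvec_props d : List.In d posvec ->
  (0 <= fst d <= 2) /\ (-2 <= snd d <= 2) /\ (fst d = 1 \/ snd d = 1 \/ snd d = -1) /\ 0 < dotZ d d.
Proof.
unfold dotZ; simpl. intros H; repeat (destruct H as [H|H]; [subst; simpl; lia|]); destruct H.
Qed.

Definition coord (u:nat) : Z*Z := (Z.of_nat (u %/ 13)%N, Z.of_nat (u %% 13)%N).

Lemma coord_id u : 13 * fst (coord u) + snd (coord u) = Z.of_nat u.
Proof.
rewrite /coord; cbn [fst snd].
have H := divn_eq u 13. move: H. set a := (u %/ 13)%N. set b := (u %% 13)%N. move=> H.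
rewrite {1}H -plusE -multE Nat2Z.inj_add Nat2Z.inj_mul. lia.
Qed.

Lemma coord_inj u v : coord u = coord v -> u = v.
Proof.
move=> H; apply: Nat2Z.inj; by rewrite -!coord_id H.
Qed.

Lemma coord_shift b o : coord (91*b + o) = (fst (coord o) + 7 * Z.of_nat b, snd (coord o)).
Proof.
rewrite /coord; cbn [fst snd].
have -> : (91 * b + o = (7 * b) * 13 + o)%N by rewrite mulnAC.
rewrite divnMDl // modnMDl Nat2Z.inj_add Nat2Z.inj_mul. f_equal. lia.
Qed.

Lemma In_zrange a k x : a <= x < a + Z.of_nat k -> List.In x (zrange a k).
Proof.
move=> H; rewrite /zrange; apply List.in_map_iff; exists (Z.to_nat (x - a)); split; first lia.
apply List.in_seq; lia.
Qed.

Lemma in_winA c : 0 <= fst c < 7 -> 0 <= snd c < 13 -> List.In c winA.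
Proof.
case: c => x y; cbn [fst snd] => ? ?; rewrite /winA; apply List.in_prod; apply In_zrange; cbn [Z.of_nat]; lia.
Qed.

Lemma adjZ_shift' k c c' : adjZ (fst c - 7*k, snd c) (fst c' - 7*k, snd c') = adjZ c c'.
Proof.
case: c c' => [x y] [x' y']; cbn [fst snd].
have H := adjZ_shift k (x - 7*k) y (x' - 7*k) y'. by rewrite !Z.sub_add in H.
Qed.

Lemma girth_prop c0 d1 d2 d3 : List.In c0 winA -> List.In d1 (nbrs c0) ->
  List.In d2 (nbrs (addZ2 c0 d1)) ->
  adjZ (addZ2 (addZ2 c0 d1) d2) c0 = false /\
  (List.In d3 (nbrs (addZ2 (addZ2 c0 d1) d2)) ->
   adjZ (addZ2 (addZ2 (addZ2 c0 d1) d2) d3) c0 && negb (eqZ2 c0 (addZ2 (addZ2 c0 d1) d2))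
     && negb (eqZ2 (addZ2 c0 d1) (addZ2 (addZ2 (addZ2 c0 d1) d2) d3)) = false).
Proof.
move=> H0 H1 H2.
have := girth_okT; rewrite /girth_ok => /List.forallb_forall /(_ c0 H0)
  /List.forallb_forall /(_ d1 H1) /List.forallb_forall /(_ d2 H2) /andP [/negbTE -> /List.forallb_forall H3].
split => // /H3; by case: (_ && _ && _).
Qed.

Lemma addZ2_sub c c' : addZ2 c (subZ2 c' c) = c'.
Proof. case: c c' => [a b] [a' b']; rewrite /addZ2 /subZ2; cbn [fst snd]; f_equal; ring. Qed.

Lemma nbrs_of c c' : adjZ c c' = true -> List.In (subZ2 c' c) (nbrs c).
Proof. move=> H; apply List.filter_In; split; [exact: adj_vec | by rewrite addZ2_sub]. Qed.

Lemma eqZ2_refl c : eqZ2 c c = true.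
Proof. by rewrite /eqZ2 !Z.eqb_refl. Qed.

Definition G (n : nat) : rel 'I_n := fun u v => adjZ (coord u) (coord v).

Lemma no_cycle34 n (k : nat) : (k = 3 \/ k = 4)%N -> ~ has_cycle_of_length (@G n) k.
Proof.
move=> Hk [_ [f [finj fadj]]].
pose k0 := fst (coord (f 0%N)) / 7.
pose c' := fun i => (fst (coord (f i)) - 7*k0, snd (coord (f i))).
have adj' : forall i, (i < k)%N -> adjZ (c' i) (c' (i.+1 %% k)%N) = true.
  by move=> i Hi; rewrite /c' adjZ_shift'; apply: fadj.
have kpos : (0 < k)%N by case: Hk => ->.
have w0 : List.In (c' 0%N) winA.
  apply: in_winA; last by case: (adj_inrow (adj' 0%N kpos)).
  rewrite /c' /k0; cbn [fst]. have := Z.mod_pos_bound (fst (coord (f 0%N))) 7. rewrite Z.mod_eq //. lia.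
have neq : forall i j, (i < k)%N -> (j < k)%N -> i <> j -> c' i <> c' j.
  move=> i j Hi Hj Hij Heq; apply: Hij; apply: finj => //; apply: val_inj; apply: coord_inj.
  move: Heq; rewrite /c'; case: (coord (f i)) => a b; case: (coord (f j)) => a' b' [] ? ?.
  f_equal; lia.
case: Hk => Hk; subst k.
- have a01 : adjZ (c' 0%N) (c' 1%N) = true := adj' 0%N erefl.
  have a12 : adjZ (c' 1%N) (c' 2%N) = true := adj' 1%N erefl.
  have a20 : adjZ (c' 2%N) (c' 0%N) = true := adj' 2%N erefl.
  move: a01 a12 a20 w0; generalize (c' 0%N) (c' 1%N) (c' 2%N) => a0 a1 a2 a01 a12 a20 w0.
  have n2 : List.In (subZ2 a2 a1) (nbrs (addZ2 a0 (subZ2 a1 a0))) by rewrite addZ2_sub; apply: nbrs_of.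
  have [H _] := girth_prop (subZ2 a2 a1) w0 (nbrs_of a01) n2.
  by move: H; rewrite !addZ2_sub a20.
- have a01 : adjZ (c' 0%N) (c' 1%N) = true := adj' 0%N erefl.
  have a12 : adjZ (c' 1%N) (c' 2%N) = true := adj' 1%N erefl.
  have a23 : adjZ (c' 2%N) (c' 3%N) = true := adj' 2%N erefl.
  have a30 : adjZ (c' 3%N) (c' 0%N) = true := adj' 3%N erefl.
  have ne02 : c' 0%N <> c' 2%N by apply: neq.
  have ne13 : c' 1%N <> c' 3%N by apply: neq.
  move: a01 a12 a23 a30 w0 ne02 ne13; generalize (c' 0%N) (c' 1%N) (c' 2%N) (c' 3%N) => a0 a1 a2 a3 a01 a12 a23 a30 w0 ne02 ne13.
  have n2 : List.In (subZ2 a2 a1) (nbrs (addZ2 a0 (subZ2 a1 a0))) by rewrite addZ2_sub; apply: nbrs_of.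
  have n3 : List.In (subZ2 a3 a2) (nbrs (addZ2 (addZ2 a0 (subZ2 a1 a0)) (subZ2 a2 a1))) by rewrite !addZ2_sub; apply: nbrs_of.
  have [_ H] := girth_prop (subZ2 a3 a2) w0 (nbrs_of a01) n2.
  move: (H n3); rewrite !addZ2_sub a30 /=.
  case E1: (eqZ2 a0 a2); first by move: (eqZ2P E1).
  case E2: (eqZ2 a1 a3); first by move: (eqZ2P E2).
  done.
Qed.

Definition cyc5 : seq nat := [:: 0; 14; 1; 13; 27]%N.

Lemma cyc5_adj : all (fun i => adjZ (coord (nth 0%N cyc5 i)) (coord (nth 0%N cyc5 (i.+1 %% 5)))) (iota 0 5).
Proof. vm_compute. reflexivity. Qed.

Lemma has5 n (d0 : 'I_n) : (28 <= n)%N -> has_cycle_of_length (@G n) 5.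
Proof.
move=> Hn; split => //.
have Hlt : forall i, (i < 5)%N -> (nth 0%N cyc5 i < n)%N.
  move=> i Hi; apply: leq_trans Hn.
  have : all (fun x => x < 28)%N cyc5 by [].
  by move/allP; apply; apply: mem_nth.
exists (fun i => insubd d0 (nth 0%N cyc5 i)); split.
- move=> i j Hi Hj /(congr1 val); rewrite !val_insubd (Hlt i Hi) (Hlt j Hj) => /eqP.
  by rewrite nth_uniq // => /eqP.
- move=> i Hi; rewrite /G !val_insubd (Hlt i Hi) Hlt ?ltn_pmod //.
  by move/allP: cyc5_adj; apply; rewrite mem_iota.
Qed.
Definition loc : seq (nat*nat) := [:: (0,14); (0,27); (1,13); (1,14); (1,28); (2,15); (2,27); (3,17); (3,28); (4,16); (5,18); (5,19); (6,19); (6,20); (6,31); (6,33); (7,21); (7,32); (7,34); (8,20); (8,21); (8,35); (9,22); (9,34); (10,24); (10,35); (11,23); (12,25); (13,27); (14,26); (15,28); (15,29); (16,29); (16,30); (16,41); (16,43); (17,31); (17,42); (17,44); (18,30); (18,31); (18,45); (19,32); (19,44); (20,34); (20,45); (21,33); (22,35); (22,36); (23,36); (23,37); (23,48); (23,50); (24,38); (24,49); (24,51); (25,37); (25,38); (26,39); (26,40); (26,53); (27,41); (27,52); (27,54); (28,40); (28,41); (28,55); (29,42); (29,54); (30,44); (30,55); (31,43); (32,45); (32,46); (33,46); (33,47); (33,58); (33,60); (34,48); (34,59); (34,61); (35,47); (35,48); (35,62); (36,49); (36,61); (37,51); (37,62); (38,50); (39,52); (40,54); (40,65); (41,53); (42,55);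 (42,56); (43,56); (43,57); (43,68); (43,70); (44,58); (44,69); (44,71); (45,57); (45,58); (45,72); (46,59); (46,71); (47,61); (47,72); (48,60); (49,62); (49,63); (50,63); (50,64); (50,75); (50,77); (51,76); (52,65); (52,66); (53,66); (53,67); (53,78); (53,80); (54,68); (54,79); (54,81); (55,67); (55,68); (55,82); (56,69); (56,81); (57,71); (57,82); (58,70); (59,72); (59,73); (60,73); (60,74); (60,85); (60,87); (61,75); (61,86); (61,88); (62,74); (62,75); (62,89); (63,76); (63,88); (64,89); (65,78); (65,92); (66,79); (66,91); (67,81); (67,92); (68,80); (69,82); (69,83); (70,83); (70,84); (70,95); (70,97); (71,85); (71,96); (71,98); (72,84); (72,85); (72,99); (73,86); (73,98); (74,88); (74,99); (75,87); (76,89); (76,90); (77,90); (77,102); (79,92); (79,93); (80,93); (80,94); (80,105); (80,107); (81,95); (81,106); (81,108); (82,94); (82,95); (82,109); (83,96); (83,108); (84,98); (84,109); (85,97); (86,99); (86,100); (87,100); (87,101); (87,112); (87,114); (88,102); (88,113); (88,115); (89,101); (89,102); (89,116); (90,103); (90,115)]%N.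

Lemma loc_size : size loc = 208%N. Proof. by []. Qed.
Lemma loc_uniq : uniq loc. Proof. by vm_compute. Qed.
Lemma loc_ok : all (fun o => (o.1 < 91)%N && (o.1 < o.2)%N && (o.2 < 117)%N && adjZ (coord o.1) (coord o.2)) loc.
Proof. vm_compute. reflexivity. Qed.

Lemma count_edges n (d0 : 'I_n) : (208 * (n %/ 91 - 1) <= #|edges (@G n)|)%N.
Proof.
set B := (n %/ 91 - 1)%N.
have Hl : forall k : 'I_208,
   [/\ ((nth (0,0)%N loc k).1 < 91)%N, ((nth (0,0)%N loc k).1 < (nth (0,0)%N loc k).2)%N, ((nth (0,0)%N loc k).2 < 117)%N & adjZ (coord (nth (0,0)%N loc k).1) (coord (nth (0,0)%N loc k).2)].
  move=> k; have : nth (0,0)%N loc k \in loc by apply: mem_nth; rewrite loc_size.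
  by move/allP: loc_ok => H /H /andP [/andP [/andP [? ?] ?] ?]; split.
have Hb : forall (b : 'I_B) x, (x < 117)%N -> (91 * b + x < n)%N.
  move=> b x Hx; have := ltn_ord b; rewrite /B => Hb.
  have := leq_trunc_div n 91. move=> Ht. move: (nat_of_ord b) Hb => bb Hbb. move: (n %/ 91)%N Ht Hbb => q Ht Hbb. clear -Ht Hbb Hx. lia.
pose h := fun bk : 'I_B * 'I_208 =>
  (insubd d0 (91 * bk.1 + (nth (0,0)%N loc bk.2).1)%N, insubd d0 (91 * bk.1 + (nth (0,0)%N loc bk.2).2)%N).
have hinj : injective h.
  move=> [b k] [b' k']; rewrite /h /= => [] [] /(congr1 val) + /(congr1 val).
  have [o1 o12 o2 _] := Hl k; have [o1' o12' o2' _] := Hl k'.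
  rewrite !val_insubd !Hb ?(ltn_trans o12) ?(ltn_trans o12') // => E1 E2.
  have ebb : nat_of_ord b = nat_of_ord b' by lia.
  have E : nth (0,0)%N loc k = nth (0,0)%N loc k'.
    move: E1 E2; rewrite ebb; case: (nth _ _ k) => x y; case: (nth _ _ k') => x' y' /= ? ?; f_equal; lia.
  move/eqP: E; rewrite nth_uniq ?loc_size ?loc_uniq // => /eqP ekk.
  by congr pair; apply: val_inj.
have sub : h @: setT \subset edges (@G n).
  apply/subsetP => x /imsetP [[b k] _ ->]; rewrite inE /h /= !val_insubd.
  have [o1 o12 o2 oadj] := Hl k.
  rewrite !Hb ?(ltn_trans o12) ?(ltn_trans o12') // ltn_add2l o12 /= /G /= !val_insubd !Hb ?(ltn_trans o12) //.
  by rewrite !coord_shift adjZ_shift; case: (coord _) oadj => ? ?; case: (coord _) => ? ?.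
have := subset_leq_card sub; rewrite card_imset // cardsT card_prod !card_ord.
by rewrite mulnC.
Qed.

End ZPart.

Section RPart.
Local Open Scope R_scope.

Definition posv (u : nat) : plane := (IZR (fst (coord u)), IZR (snd (coord u))).
Definition gamf (a b : Z*Z) (t : R) : plane :=
  (IZR (fst a) + t * (IZR (fst b) - IZR (fst a)), IZR (snd a) + t * (IZR (snd b) - IZR (snd a))).

Lemma cont_lin (a c : R) : continuity (fun t => a + t * c).
Proof.
apply: continuity_plus; first by apply: continuity_const => x y.
apply: continuity_mult; [exact: (derivable_continuous _ derivable_id) | by apply: continuity_const => x y].
Qed.

Lemma no_int k : ~ (0 < IZR k < 1).
Proof.
move=> [H1 H2]; have := lt_0_IZR _ H1 => H3.
have : (1 <= k)%Z by lia.
move/IZR_le; lra.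
Qed.

Lemma arc_ok (a b : Z*Z) : a <> b -> is_arc (gamf a b) (IZR (fst a), IZR (snd a)) (IZR (fst b), IZR (snd b)).
Proof.
move=> Hab; split; first exact: cont_lin.
split; first exact: cont_lin.
split; last by split; rewrite /gamf; f_equal; ring.
move=> s t _ _ [E1 E2].
case: (Z.eq_dec (fst a) (fst b)) => H1.
- case: (Z.eq_dec (snd a) (snd b)) => H2.
    by case: Hab; case: a b H1 H2 {E1 E2} => ? ? [? ?] /= -> ->.
  have : IZR (snd b) - IZR (snd a) <> 0.
    by rewrite -minus_IZR; apply: not_0_IZR; lia.
  move=> Hn; apply: (Rmult_eq_reg_r _ _ _ _ Hn); lra.
- have : IZR (fst b) - IZR (fst a) <> 0.
    by rewrite -minus_IZR; apply: not_0_IZR; lia.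
  move=> Hn; apply: (Rmult_eq_reg_r _ _ _ _ Hn); lra.
Qed.

Lemma avoid_ok (a b : Z*Z) (w1 w2 : Z) t : List.In (subZ2 b a) posvec -> 0 < t < 1 ->
  gamf a b t <> (IZR w1, IZR w2).
Proof.
move=> /posvec_props [_ [_ [H _]]] Ht [E1 E2].
rewrite /subZ2 /= in H.
case: H => H.
- apply: (@no_int (w1 - fst a)); rewrite minus_IZR -E1.
  have -> : IZR (fst b) - IZR (fst a) = 1 by rewrite -minus_IZR H.
  lra.
- case: H => H.
  + apply: (@no_int (w2 - snd a)); rewrite minus_IZR -E2.
    have -> : IZR (snd b) - IZR (snd a) = 1 by rewrite -minus_IZR H.
    lra.
  + apply: (@no_int (snd a - w2)); rewrite minus_IZR -E2.
    have -> : IZR (snd b) - IZR (snd a) = -1 by rewrite -minus_IZR H.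
    lra.
Qed.

Lemma meet_nec (W U V : Z*Z) (s t : R) :
  0 < s < 1 -> 0 < t < 1 -> (0 < dotZ U U)%Z ->
  s * IZR (fst U) - t * IZR (fst V) = IZR (fst W) ->
  s * IZR (snd U) - t * IZR (snd V) = IZR (snd W) ->
  meetZ W U V = true /\ (crossZ U V <> 0%Z -> s = IZR (crossZ W V) / IZR (crossZ U V)).
Proof.
case: W U V => [wx wy] [ux uy] [vx vy]; rewrite /meetZ /crossZ /dotZ; cbn [fst snd] => Hs Ht HL E1 E2.
have hX : s * IZR (ux*vy - uy*vx) = IZR (wx*vy - wy*vx) by rewrite !minus_IZR !mult_IZR -E1 -E2; ring.
have hY : t * IZR (ux*vy - uy*vx) = IZR (wx*uy - wy*ux) by rewrite !minus_IZR !mult_IZR -E1 -E2; ring.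
have hP : s * IZR (ux*ux + uy*uy) = IZR (wx*ux + wy*uy) + t * IZR (vx*ux + vy*uy)
  by rewrite !plus_IZR !mult_IZR -E1 -E2; ring.
have Lpos := IZR_lt _ _ HL.
move: hX hY hP Lpos.
move: (ux*vy - uy*vx)%Z (wx*vy - wy*vx)%Z (wx*uy - wy*ux)%Z (wx*ux + wy*uy)%Z (vx*ux + vy*uy)%Z (ux*ux + uy*uy)%Z
  => D X Y a c L hX hY hP Lpos.
case: (Z.eqb_spec D 0) => HD.
- split => //.
  rewrite HD Rmult_0_r in hX; rewrite HD Rmult_0_r in hY.
  have -> : X = 0%Z by apply: eq_IZR_R0; rewrite -hX.
  have -> : Y = 0%Z by apply: eq_IZR_R0; rewrite -hY.
  rewrite /=; apply/andP; split; apply/Z.ltb_lt.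
  + apply/Z.max_lt_iff; case: (Z.le_gt_cases 0 c) => Hc.
    * right; apply: lt_IZR; rewrite plus_IZR; have := IZR_le _ _ Hc; nra.
    * left; apply: lt_IZR; have := IZR_lt _ _ Hc; nra.
  + apply/Z.min_lt_iff; case: (Z.le_gt_cases 0 c) => Hc.
    * left; apply: lt_IZR; have := IZR_le _ _ Hc; nra.
    * right; apply: lt_IZR; rewrite plus_IZR; have := IZR_lt _ _ Hc; nra.
- have HD' : IZR D <> 0 by apply: not_0_IZR.
  have DD : 0 < IZR D * IZR D.
    case: (Rlt_or_le 0 (IZR D)) => h; first nra.
    have : IZR D < 0 by lra. nra.
  split; last by move=> _; rewrite -hX; field.
  apply/andP; split; first (apply/andP; split; first (apply/andP; split)).
  all: apply/Z.ltb_lt; apply: lt_IZR; rewrite ?mult_IZR -?hX -?hY; nra.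
Qed.

Lemma edge_facts n (p : 'I_n * 'I_n) : p \in edges (@G n) ->
  adjZ (coord p.1) (coord p.2) = true /\ List.In (subZ2 (coord p.2) (coord p.1)) posvec.
Proof.
rewrite inE => /andP [Hlt Hadj]; split => //.
apply: vec16_orient; first exact: adj_vec.
have h1 := coord_id p.1; have h2 := coord_id p.2.
rewrite /subZ2; cbn [fst snd]. lia.
Qed.

Lemma size_length T (s : seq T) : size s = List.length s.
Proof. by elim: s => //= x s ->. Qed.

Lemma in_winQ A0 C0 : (fst A0 - 4 <= fst C0 < fst A0 + 5)%Z -> (0 <= snd C0 < 13)%Z -> List.In C0 (winQ A0).
Proof.
case: C0 => x y; cbn [fst snd] => ? ?; rewrite /winQ; apply List.in_prod; apply In_zrange; cbn [Z.of_nat]; lia.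
Qed.

Lemma norm_winA c : (0 <= snd c < 13)%Z -> List.In (fst c - 7 * (fst c / 7), snd c)%Z winA.
Proof.
move=> H; apply: in_winA => //; cbn [fst].
have := Z.mod_pos_bound (fst c) 7; rewrite Z.mod_eq //; lia.
Qed.

Lemma coord_of_id (c : Z*Z) u : (13 * fst c + snd c)%Z = Z.of_nat u -> (0 <= snd c < 13)%Z -> c = coord u.
Proof.
move=> H Hs.
have H2 := coord_id u.
have Hs2 : (0 <= snd (coord u) < 13)%Z by rewrite /coord; cbn [snd]; have := ltn_pmod u (isT : 0 < 13)%N; lia.
case: c H Hs => x y; cbn [fst snd] => H Hs.
case: (coord u) H2 Hs2 => x' y'; cbn [fst snd] => H2 Hs2.
have : x = x' by lia.
move=> ?; subst; f_equal; lia.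
Qed.

Definition gamv n (p : 'I_n * 'I_n) : R -> plane := gamf (coord p.1) (coord p.2).

Lemma cross_list n (p : 'I_n * 'I_n) : p \in edges (@G n) ->
  exists L : seq (('I_n * 'I_n) * plane), (size L <= 2)%N /\
   (forall q z, crossing (@G n) (@gamv n) p q z -> List.In (q, z) L).
Proof.
move=> Hp; have [Hadj HU] := edge_facts Hp.
case: p Hp Hadj HU => p1 p2 Hp /= Hadj HU.
set A := coord p1 in Hadj HU *. set B := coord p2 in Hadj HU *.
set U := subZ2 B A in HU *.
set k0 := (fst A / 7)%Z.
set A0 := (fst A - 7 * k0, snd A)%Z.
have wA : List.In A0 winA by apply: norm_winA; case: (adj_inrow Hadj).
have eAU : addZ2 A0 U = (fst B - 7 * k0, snd B)%Z by rewrite /addZ2 /A0 /U /subZ2; cbn [fst snd]; f_equal; ring.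
have adjA0 : adjZ A0 (addZ2 A0 U) = true by rewrite eAU /A0 adjZ_shift'.
have := cross_okT; rewrite /cross_ok => /List.forallb_forall /(_ A0 wA) /List.forallb_forall /(_ U HU) H.
cbv beta in H; rewrite adjA0 in H; move: H => /orP [//|H]; cbv zeta in H.
move: H => /andP [/Nat.leb_le Hlen /List.forallb_forall Hcr].
pose edge_of := fun CV : (Z*Z)*(Z*Z) =>
  (insubd p1 (Z.to_nat (13 * (fst (fst CV) + 7*k0) + snd (fst CV))),
   insubd p1 (Z.to_nat (13 * (fst (fst CV) + 7*k0 + fst (snd CV)) + snd (fst CV) + snd (snd CV)))).
pose zpt := fun CV : (Z*Z)*(Z*Z) =>
  (IZR (fst A) + IZR (crossZ (subZ2 (fst CV) A0) (snd CV)) / IZR (crossZ U (snd CV)) * IZR (fst U),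
   IZR (snd A) + IZR (crossZ (subZ2 (fst CV) A0) (snd CV)) / IZR (crossZ U (snd CV)) * IZR (snd U)).
exists (List.map (fun CV => (edge_of CV, zpt CV)) (cands A0 U)).
split; first by rewrite size_length List.length_map; apply/leP.
move=> [q1 q2] z [Hq [Hqp [s [t [Hs0 [Hs1 [Ht0 [Ht1 [Ez1 Ez2]]]]]]]]].
have [HadjQ HV] := edge_facts Hq.
rewrite /gamv in Ez1 Ez2; cbn [fst snd] in HadjQ, HV, Ez1, Ez2.
rewrite -/A -/B in Ez1.
have hC := coord_id q1; have hD := coord_id q2.
set C := coord q1 in HadjQ HV Ez2 hC *. set D2 := coord q2 in HadjQ HV Ez2 hD *.
set V := subZ2 D2 C in HV *.
have E := Ez1; rewrite -Ez2 /gamf in E.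
have E1 := f_equal fst E; have E2 := f_equal snd E; cbn [fst snd] in E1, E2.
have M1 : s * IZR (fst U) - t * IZR (fst V) = IZR (fst (subZ2 C A))
  by rewrite /U /V /subZ2; cbn [fst snd]; rewrite !minus_IZR; lra.
have M2 : s * IZR (snd U) - t * IZR (snd V) = IZR (snd (subZ2 C A))
  by rewrite /U /V /subZ2; cbn [fst snd]; rewrite !minus_IZR; lra.
have [[u1 u2] [_ [_ HUU]]] := posvec_props HU.
have [[v1 v2] _] := posvec_props HV.
have [Hm Hu] := meet_nec (conj Hs0 Hs1) (conj Ht0 Ht1) HUU M1 M2.
set C0 := (fst C - 7 * k0, snd C)%Z.
have eW : subZ2 C0 A0 = subZ2 C A by rewrite /subZ2 /C0 /A0; cbn [fst snd]; f_equal; ring.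
have Wx : (-2 < fst (subZ2 C A) < 2)%Z.
  have := IZR_le _ _ u1; have := IZR_le _ _ u2; have := IZR_le _ _ v1; have := IZR_le _ _ v2.
  move=> h1 h2 h3 h4; split; apply: lt_IZR; rewrite -M1; nra.
have inQ : List.In C0 (winQ A0).
  apply: in_winQ; last by case: (adj_inrow HadjQ).
  move: Wx; rewrite /C0 /A0 /subZ2; cbn [fst snd]; lia.
have inC : List.In (C0, V) (cands A0 U).
  apply List.filter_In; split; first by apply List.in_prod.
  cbn [fst snd]; rewrite eW Hm /=.
  have -> : adjZ C0 (addZ2 C0 V) = true.
    have -> : addZ2 C0 V = (fst D2 - 7 * k0, snd D2)%Z
      by rewrite /addZ2 /C0 /V /subZ2; cbn [fst snd]; f_equal; ring.
    by rewrite /C0 adjZ_shift'.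
  rewrite andbT; apply/negP => /andP [/eqZ2P e1 /eqZ2P e2].
  apply: Hqp.
  have eC : C = A by move: e1; rewrite /C0 /A0; case: (C) => ? ?; case: (A) => ? ?; cbn [fst snd] => [] [] ? ->; f_equal; lia.
  have eD : D2 = B.
    have : addZ2 C V = addZ2 A U by rewrite eC e2.
    by rewrite /U /V !addZ2_sub.
  by congr pair; apply: val_inj; apply: coord_inj.
have Hcr' : crossZ U V <> 0%Z by move: (Hcr _ inC); cbn [snd] => /negP H /Z.eqb_eq H'; apply: H; rewrite H'.
have hs := Hu Hcr'.
apply List.in_map_iff; exists (C0, V); split => //.
rewrite /edge_of /zpt; cbn [fst snd].
congr pair.
- congr pair; apply: val_inj; rewrite val_insubd.
  + have -> : (13 * (fst C - 7 * k0 + 7 * k0) + snd C)%Z = Z.of_nat q1 by rewrite -hC; ring.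
    by rewrite Nat2Z.id ltn_ord.
  + have -> : (13 * (fst C0 + 7 * k0 + fst V) + snd C0 + snd V)%Z = Z.of_nat q2
      by rewrite -hD /C0 /V /subZ2; cbn [fst snd]; ring.
    by rewrite Nat2Z.id ltn_ord.
- rewrite -Ez1 eW -hs /U /subZ2; cbn [fst snd]; rewrite !minus_IZR. by rewrite /gamf.
Qed.

End RPart.


Theorem theorem17 :
  exists C : R, exists N : nat, forall n : nat, (N <= n)%N ->
    exists e : rel 'I_n,
      simple_graph e /\ k_planar 2 e /\ girth_is e 5 /\
      Rle (Rminus (Rmult (2 + 2 / 7) (INR n)) C) (INR #|edges e|).
Proof.
exists (IZR 500), 100%N => n Hn.
have n0 : (0 < n)%N by apply: leq_trans Hn.
pose d0 : 'I_n := Ordinal n0.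
exists (@G n); split.
  by split; [move=> u v; exact: adjZ_sym | move=> u; exact: adjZ_irr].
split.
  exists (fun u : 'I_n => posv u), (@gamv n); split.
    move=> u v; rewrite /posv => [] [] /eq_IZR E1 /eq_IZR E2.
    apply: val_inj; apply: coord_inj.
    by rewrite /coord E1 E2.
  split.
    move=> p Hp; have [Hadj HU] := edge_facts Hp; split.
      apply: arc_ok => E; by rewrite E adjZ_irr in Hadj.
    move=> t w Ht; exact: avoid_ok HU Ht.
  move=> p Hp; have [L [HL1 HL2]] := cross_list Hp; exists L; split => //.
split.
  split; first exact: has5 d0 (leq_trans _ Hn).
  move=> l Hl Hc; have H3 := Hc.1.
  have : (l = 3 \/ l = 4)%N by lia.
  by move/no_cycle34 => /(_ n).
have hE := count_edges d0.
move: hE; set q := (n %/ 91)%N => hE.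
have hq : (1 <= q)%N by rewrite /q; have := leq_trunc_div n 91; lia.
have hn : (n < 91 * q + 91)%N by rewrite /q; have := ltn_ceil n (isT : 0 < 91)%N; lia.
have h1 : (Nat.mul 208 q <= Nat.add #|edges (@G n)| 208)%coq_nat by lia.
have h2 : (n < Nat.add (Nat.mul 91 q) 91)%coq_nat by lia.
apply le_INR in h1; apply lt_INR in h2.
rewrite plus_INR mult_INR in h1; rewrite plus_INR mult_INR in h2.
have e208 : INR 208 = IZR 208 by rewrite INR_IZR_INZ.
have e91 : INR 91 = IZR 91 by rewrite INR_IZR_INZ.
rewrite e208 in h1; rewrite e91 in h2.
lra.
Qed.
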